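(* Let $n\in\mathbb{Z}\setminus\{0\}$, $r_2\in\mathbb{R}$, $d\in\mathbb{N}$, and let $P\in\mathbb{Z}$ be sufficiently negative (depending on $r_2$). Consider $$S=\sum_{c\in\mathbb{N}} c^{r_2}\sum_{\substack{a,b\in\mathbb{Z}\setminus\{0\}\\ ad-bc=n}} (bc)^{P}.$$ If $d\mid n$, then $$S=(-1)^{P+1}n^{P}\sigma_{r_2}(n)+2\,d^{P}\,\delta_{2\mid P}\,\zeta(-P)\,\zeta(-r_2-P)\prod_{p\mid d}\Big(1+(1-p^{P})\big(p^{r_2}+p^{2r_2}+\cdots+p^{v_p(d)\,r_2}\big)\Big).$$ If $d\nmid n$, then $$S=(-1)^{P+1}n^{P}\sigma_{r_2}(n)+d^{\,r_2+2P}\sum_{\substack{0<c'\le d\\ \gcd(c',d)\mid n}}\frac{\zeta\!\left(-r_2-P,\tfrac{c'}{d}\right)}{\gcd(c',d)^{P}}\sum_{m\in\mathbb{Z}}\big(m+u_{c',d}\big)^{P}.$$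
   Context: For $m\in\mathbb{Z}\setminus\{0\}$ and $\nu\in\mathbb{C}$, $\sigma_\nu(m)=\sum_{e\in\mathbb{N},\,e\mid m}e^{\nu}$. $\zeta$ is the Riemann zeta function and $\zeta(s,a)=\sum_{j\ge0}(j+a)^{-s}$ the Hurwitz zeta function. $\delta_{2\mid P}$ is $1$ if $P$ is even and $0$ otherwise. The product runs over primes $p$ dividing $d$ and $v_p(d)$ is the $p$-adic valuation. For $c,d\in\mathbb{N}$ with $\gcd(c,d)\mid n$: $B=\{b\in\mathbb{Z}:\exists a\in\mathbb{Z},\ ad-bc=n\}$, $b^*$ is an element of $B$ of minimal absolute value, and $u_{c,d}=b^*\gcd(c,d)/d$ (choice of $b^*$ changes $u_{c,d}$ only by an integer, not affecting the sums over $m\in\mathbb{Z}$). *)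

(* Defs.v *)
From Stdlib Require Import Reals ZArith ClassicalEpsilon.
From Coquelicot Require Import Coquelicot.
From mathcomp Require Import ssreflect ssrbool ssrnat seq div prime.

Open Scope R_scope.

(* Sum over Z of f (two-sided; used only for absolutely summable f). *)
Definition sumZ (f : Z -> R) : R :=
  Series (fun k => f (Z.of_nat k)) + Series (fun k => f (- Z.of_nat (S k))%Z).

Definition zeta (s : R) : R := Series (fun j => Rpower (INR (S j)) (- s)).

Definition hurwitz_zeta (s a : R) : R := Series (fun j => Rpower (INR j + a) (- s)).

Definition sigma (nu : R) (m : Z) : R :=
  foldr Rplus 0 (map (fun e => Rpower (INR e) nu) (divisors (Z.abs_nat m))).

Definition delta_even (P : Z) : R := if Z.even P then 1 else 0.

Definition inner_sum (n : Z) (d c : nat) (P : Z) : R :=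
  sumZ (fun a => sumZ (fun b =>
    if (a =? 0)%Z || (b =? 0)%Z then 0
    else if (a * Z.of_nat d - b * Z.of_nat c =? n)%Z
         then powerRZ (IZR (b * Z.of_nat c)) P else 0)).

Definition S_sum (n : Z) (r2 : R) (d : nat) (P : Z) : R :=
  Series (fun k => Rpower (INR (S k)) r2 * inner_sum n d (S k) P).

Definition bstar (n : Z) (c d : nat) : Z :=
  epsilon (inhabits 0%Z) (fun b =>
    (exists a : Z, (a * Z.of_nat d - b * Z.of_nat c = n)%Z) /\
    forall b' : Z, (exists a : Z, (a * Z.of_nat d - b' * Z.of_nat c = n)%Z) ->
      (Z.abs b <= Z.abs b')%Z).

Definition u_cd (n : Z) (c d : nat) : R :=
  IZR (bstar n c d) * INR (gcdn c d) / INR d.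

Definition euler_prod (d : nat) (r2 : R) (P : Z) : R :=
  foldr Rmult 1 (map (fun p =>
     1 + (1 - powerRZ (INR p) P) *
         foldr Rplus 0 (map (fun k => Rpower (INR p) (INR k * r2)) (iota 1 (logn p d))))
     (primes d)).

Definition rhs_div (n : Z) (r2 : R) (d : nat) (P : Z) : R :=
  powerRZ (-1) (P + 1) * powerRZ (IZR n) P * sigma r2 n
  + 2 * powerRZ (INR d) P * delta_even P * zeta (IZR (- P)) * zeta (- r2 - IZR P)
      * euler_prod d r2 P.

Definition rhs_ndiv (n : Z) (r2 : R) (d : nat) (P : Z) : R :=
  powerRZ (-1) (P + 1) * powerRZ (IZR n) P * sigma r2 n
  + Rpower (INR d) (r2 + 2 * IZR P) *
    foldr Rplus 0 (map (fun c' =>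
        hurwitz_zeta (- r2 - IZR P) (INR c' / INR d) / powerRZ (INR (gcdn c' d)) P
        * sumZ (fun m => powerRZ (IZR m + u_cd n c' d) P))
      [seq c' <- iota 1 d | gcdn c' d %| Z.abs_nat n]).

(* Main.v *)
Require Import Defs.
From Stdlib Require Import Reals ZArith.
From mathcomp Require Import ssreflect ssrbool ssrnat div.
From Stdlib Require Import Lia Lra ClassicalEpsilon Classical.
From Coquelicot Require Import Coquelicot.
From mathcomp Require Import ssreflect ssrbool eqtype ssrnat seq div prime path.
From mathcomp Require Import zify.
Open Scope R_scope.
Ltac neq0 := repeat split; try (apply Rgt_not_eq; lra); try (apply Rlt_not_eq; lra).

Fixpoint ps (u : nat -> R) (N : nat) : R :=
  match N with O => 0 | S N' => ps u N' + u N' end.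

Lemma ps_sum_n u N : ps u (S N) = sum_n u N.
Proof.
  induction N as [|N IH].
  - rewrite sum_O /=. lra.
  - rewrite sum_Sn -IH /=. reflexivity.
Qed.

Lemma is_series_ps u l : is_series u l <-> is_lim_seq (ps u) l.
Proof.
  rewrite (is_lim_seq_incr_1 (ps u) l).
  split; intro H.
  - apply (is_lim_seq_ext (sum_n u)). intro n; by rewrite ps_sum_n. exact H.
  - have H' : is_lim_seq (sum_n u) l.
    { apply (is_lim_seq_ext (fun n => ps u (S n))). intro n; by rewrite ps_sum_n. exact H. }
    exact H'.
Qed.

Lemma ps_add u a b : ps u (a + b)%coq_nat = ps u a + ps (fun i => u (a + i)%coq_nat) b.
Proof.
  induction b as [|b IH].
  - rewrite Nat.add_0_r /=. lra.
  - rewrite Nat.add_succ_r /= IH. lra.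
Qed.

Lemma ps_single (x : R) i0 M : ps (fun i => if Nat.eqb i i0 then x else 0) M
  = if Nat.ltb i0 M then x else 0.
Proof.
  induction M as [|M IH]; first by [].
  rewrite /= IH.
  destruct (Nat.eqb M i0) eqn:E1; destruct (Nat.ltb i0 M) eqn:E2;
  destruct (Nat.ltb i0 (S M)) eqn:E3;
  rewrite ?Nat.eqb_eq ?Nat.eqb_neq ?Nat.ltb_lt ?Nat.ltb_ge in E1 E2 E3; try lra; lia.
Qed.



Lemma ps_ext u v N : (forall i, (i < N)%coq_nat -> u i = v i) -> ps u N = ps v N.
Proof.
  induction N as [|N IH]; intro H; first by [].
  simpl. rewrite IH.
  - rewrite H; [reflexivity | lia].
  - intros i Hi; apply H; lia.
Qed.

Lemma block_ps (u v : nat -> R) M i0 :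
  (i0 < M)%coq_nat ->
  (forall N i, (i < M)%coq_nat -> u (M*N + i)%coq_nat = if Nat.eqb i i0 then v N else 0) ->
  forall N, ps u (M*N)%coq_nat = ps v N.
Proof.
  intros Hi Hu N. induction N as [|N IH].
  - by rewrite Nat.mul_0_r.
  - rewrite Nat.mul_succ_r ps_add IH /=.
    rewrite (ps_ext (fun i => u (M*N+i)%coq_nat) (fun i => if Nat.eqb i i0 then v N else 0) M).
    + rewrite ps_single. destruct (Nat.ltb_spec i0 M). reflexivity. lia.
    + intros i Hi'. by apply Hu.
Qed.

Lemma block_series (u v : nat -> R) M i0 :
  (i0 < M)%coq_nat ->
  (forall N i, (i < M)%coq_nat -> u (M*N + i)%coq_nat = if Nat.eqb i i0 then v N else 0) ->
  ex_series u -> is_series v (Series u).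
Proof.
  intros Hi Hu He.
  have H := Series_correct _ He. apply is_series_ps in H.
  apply is_series_ps.
  apply (is_lim_seq_ext (fun N => ps u (M*N)%coq_nat)).
  { intro N; by apply (block_ps u v M i0). }
  apply (is_lim_seq_subseq (ps u) _ (fun N => (M*N)%coq_nat)); last exact H.
  intros P [N0 HN0]. exists N0. intros n Hn. apply HN0. nia.
Qed.

Lemma ex_series_abs_le (u w : nat -> R) :
  (forall k, Rabs (u k) <= w k) -> ex_series w -> ex_series (fun k => Rabs (u k)).
Proof.
  intros H Hw. apply (@ex_series_le R_AbsRing R_CompleteNormedModule _ w); last exact Hw.
  intro k. rewrite /norm /= /abs /= Rabs_Rabsolu. apply H.
Qed.

Lemma ex_series_abs_ex (u : nat -> R) : ex_series (fun k => Rabs (u k)) -> ex_series u.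
Proof. apply ex_series_Rabs. Qed.

Lemma ex_series_inv_sq : ex_series (fun k => / (INR (S k) * INR (S k))).
Proof.
  pose b := fun k : nat => / INR (S k) - / INR (S (S k)).
  have Hb : is_series b 1.
  { apply is_series_ps.
    have E : forall N, ps b N = 1 - / INR (S N).
    { induction N as [|N IH].
      - simpl. lra.
      - change (ps b (S N)) with (ps b N + b N). rewrite IH /b. rewrite !(S_INR (S N)). lra. }
    apply (is_lim_seq_ext (fun N => 1 - / INR (S N))). intro N; by rewrite E.
    have -> : Finite 1 = Rbar_minus 1 0 by rewrite /Rbar_minus /= ; f_equal; lra.
    apply is_lim_seq_minus'. apply is_lim_seq_const.
    apply (is_lim_seq_incr_1 (fun n => / INR n) 0).
    have -> : Finite 0 = Rbar_inv p_infty by []. apply is_lim_seq_inv. apply is_lim_seq_INR. by []. }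
  apply (@ex_series_le R_AbsRing R_CompleteNormedModule _ (fun k => 2 * b k)).
  - intro k. change (norm (/ (INR (S k) * INR (S k)))) with (Rabs (/ (INR (S k) * INR (S k)))).
    unfold b. rewrite !(S_INR (S k)).
    have Hk : 0 < INR (S k) by apply lt_0_INR; lia.
    rewrite Rabs_pos_eq; last (apply Rlt_le, Rinv_0_lt_compat; nra).
    set x := INR (S k). 
    have Hx1 : 1 <= x by rewrite /x S_INR; have := pos_INR k; lra.
    clearbody x.
    have E1 : / (x * x) * (x * x * (x + 1)) = x + 1 by field; neq0.
    have E2 : 2 * (/ x - / (x + 1)) * (x * x * (x + 1)) = 2 * x by field; neq0.
    apply (Rmult_le_reg_r (x * x * (x + 1))). nra.
    rewrite E1 E2. lra.
  - apply (ex_series_scal_l 2 b). by exists 1.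
Qed.

Lemma powerRZ_abs x P : Rabs (powerRZ x P) = powerRZ (Rabs x) P.
Proof.
  destruct P as [|p|p]; simpl.
  - apply Rabs_R1.
  - symmetry; apply RPow_abs.
  - rewrite Rabs_inv -RPow_abs. reflexivity.
Qed.

Lemma powerRZ_0_neg P : (P < 0)%Z -> powerRZ 0 P = 0.
Proof.
  intro H. destruct P as [|p|p]; try lia. simpl.
  rewrite pow_i. apply Rinv_0. lia.
Qed.

Lemma Rpower_anti_base a b c : c <= 0 -> 0 < a <= b -> Rpower b c <= Rpower a c.
Proof.
  intros Hc Hab.
  have E : forall x, Rpower x c = / Rpower x (-c) by intro; rewrite -Rpower_Ropp Ropp_involutive.
  rewrite !E.
  apply Rinv_le_contravar. apply exp_pos.
  apply Rle_Rpower_l; lra.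
Qed.

Lemma Rpower_m2 x : 0 < x -> Rpower x (-2) = / (x * x).
Proof.
  intro Hx. have -> : -2 = - INR 2 by simpl; ring.
  rewrite Rpower_Ropp Rpower_pow //. simpl. f_equal. ring.
Qed.

Lemma ex_series_Rpower s : s <= -2 -> ex_series (fun k => Rpower (INR (S k)) s).
Proof.
  intro Hs. apply ex_series_Rabs.
  apply (ex_series_abs_le _ (fun k => / (INR (S k) * INR (S k)))); last exact ex_series_inv_sq.
  intro k. have Hk : 1 <= INR (S k) by rewrite S_INR; have := pos_INR k; lra.
  rewrite Rabs_pos_eq; last (apply Rlt_le, exp_pos).
  rewrite -Rpower_m2; last lra.
  apply Rle_Rpower; lra.
Qed.

Lemma ex_series_pow_affine (al be : R) (P : Z) :
  1 <= al -> (P <= -2)%Z ->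
  ex_series (fun k => Rabs (powerRZ (al * INR k + be) P)).
Proof.
  intros Hal HP.
  pose K := Z.to_nat (up (2 * Rabs be + 4)).
  have HK : 2 * Rabs be + 4 <= INR K.
  { rewrite /K INR_IZR_INZ Z2Nat.id.
    - have := archimed (2 * Rabs be + 4). lra.
    - have := archimed (2 * Rabs be + 4). have := Rabs_pos be. intros.
      apply le_IZR. lra. }
  apply (ex_series_incr_n _ K).
  apply (ex_series_abs_le _ (fun k => 4 * / (INR (S k) * INR (S k)))).
  2: { apply (ex_series_scal_l 4 (fun k => / (INR (S k) * INR (S k)))). exact ex_series_inv_sq. }
  intro k. rewrite powerRZ_abs.
  set x := Rabs (al * INR (K + k)%coq_nat + be).
  have Hkx : (INR k + 1) / 2 <= x /\ 1 <= x.
  { rewrite /x plus_INR.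
    have := pos_INR k. have := Rabs_pos be. have := Rle_abs be. have := Rle_abs (- be).
    rewrite Rabs_Ropp. intros.
    have Hq : al * (INR K + INR k) >= INR K + INR k by nra.
    rewrite Rabs_pos_eq; lra. }
  clearbody x. destruct Hkx as [Hx1 Hx2].
  rewrite powerRZ_Rpower; last lra.
  apply (Rle_trans _ (Rpower x (-2))).
  { apply Rle_Rpower; first lra. apply IZR_le in HP. exact HP. }
  rewrite Rpower_m2; last lra.
  rewrite S_INR.
  have Hk0 : 0 < INR k + 1 by have := pos_INR k; lra.
  have -> : 4 * / ((INR k + 1) * (INR k + 1)) = / (((INR k + 1)/2) * ((INR k + 1)/2)) by field; neq0.
  apply Rinv_le_contravar. nra. nra.
Qed.

Definition absZ (f : Z -> R) : Prop :=
  ex_series (fun k => Rabs (f (Z.of_nat k))) /\ ex_series (fun k => Rabs (f (- Z.of_nat (S k))%Z)).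

Lemma sumZ_ext f g : (forall z, f z = g z) -> sumZ f = sumZ g.
Proof.
  intro H. rewrite /sumZ. f_equal; apply Series_ext; intro; apply H.
Qed.

Lemma absZ_ext f g : (forall z, f z = g z) -> absZ f -> absZ g.
Proof.
  intros H [H1 H2]. split.
  - apply (ex_series_ext _ _ (fun k => f_equal Rabs (H _)) H1).
  - apply (ex_series_ext _ _ (fun k => f_equal Rabs (H _)) H2).
Qed.

Lemma absZ_le f g : (forall z, Rabs (f z) <= Rabs (g z)) -> absZ g -> absZ f.
Proof.
  intros H [H1 H2]. split.
  - apply (ex_series_abs_le _ _ (fun k => H _) H1).
  - apply (ex_series_abs_le _ _ (fun k => H _) H2).
Qed.

Lemma absZ_ex1 f : absZ f -> ex_series (fun k => f (Z.of_nat k)).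
Proof. intros [H _]. by apply ex_series_Rabs. Qed.
Lemma absZ_ex2 f : absZ f -> ex_series (fun k => f (- Z.of_nat (S k))%Z).
Proof. intros [_ H]. by apply ex_series_Rabs. Qed.

Lemma absZ_plus f g : absZ f -> absZ g -> absZ (fun z => f z + g z).
Proof.
  intros [F1 F2] [G1 G2]. split.
  - apply (ex_series_abs_le _ (fun k => Rabs (f (Z.of_nat k)) + Rabs (g (Z.of_nat k)))).
    intro; apply Rabs_triang. apply (ex_series_plus _ _ F1 G1).
  - apply (ex_series_abs_le _ (fun k => Rabs (f (- Z.of_nat (S k))%Z) + Rabs (g (- Z.of_nat (S k))%Z))).
    intro; apply Rabs_triang. apply (ex_series_plus _ _ F2 G2).
Qed.

Lemma absZ_scal c f : absZ f -> absZ (fun z => c * f z).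
Proof.
  intros [F1 F2]. split.
  - apply (ex_series_ext (fun k => Rabs c * Rabs (f (Z.of_nat k)))). intro; by rewrite Rabs_mult.
    apply (ex_series_scal_l (Rabs c) _ F1).
  - apply (ex_series_ext (fun k => Rabs c * Rabs (f (- Z.of_nat (S k))%Z))). intro; by rewrite Rabs_mult.
    apply (ex_series_scal_l (Rabs c) _ F2).
Qed.

Lemma absZ_opp f : absZ f -> absZ (fun z => - f z).
Proof. intro H. apply (absZ_ext (fun z => (-1) * f z)). intro; ring. by apply absZ_scal. Qed.

Lemma sumZ_plus f g : absZ f -> absZ g -> sumZ (fun z => f z + g z) = sumZ f + sumZ g.
Proof.
  intros Hf Hg. rewrite /sumZ.
  rewrite (Series_plus (fun k => f (Z.of_nat k)) (fun k => g (Z.of_nat k))); try (apply absZ_ex1; assumption).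
  rewrite (Series_plus (fun k => f (- Z.of_nat (S k))%Z) (fun k => g (- Z.of_nat (S k))%Z)); try (apply absZ_ex2; assumption).
  ring.
Qed.

Lemma sumZ_scal c f : sumZ (fun z => c * f z) = c * sumZ f.
Proof. rewrite /sumZ !Series_scal_l. ring. Qed.

Lemma sumZ_minus f g : absZ f -> absZ g -> sumZ (fun z => f z - g z) = sumZ f - sumZ g.
Proof.
  intros Hf Hg.
  rewrite (sumZ_ext _ (fun z => f z + (-1) * g z)); last (intro; ring).
  rewrite sumZ_plus //. rewrite sumZ_scal. ring. by apply absZ_scal.
Qed.

Lemma Series_0 : Series (fun _ => 0) = 0.
Proof.
  rewrite (Series_ext _ (fun n => 0 * 0)); last (intro; ring).
  rewrite Series_scal_l. ring.
Qed.

Lemma is_series_single (x : R) k0 : is_series (fun k => if Nat.eqb k k0 then x else 0) x.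
Proof.
  apply is_series_ps. apply (is_lim_seq_ext_loc (fun _ => x)).
  - exists (S k0). intros N HN. rewrite ps_single. destruct (Nat.ltb_spec k0 N); [reflexivity | lia].
  - apply is_lim_seq_const.
Qed.

Lemma sumZ_single (x : R) z0 : sumZ (fun z => if Z.eqb z z0 then x else 0) = x.
Proof.
  rewrite /sumZ. destruct (Z_le_gt_dec 0 z0) as [Hz|Hz].
  - rewrite (Series_ext _ (fun k => if Nat.eqb k (Z.to_nat z0) then x else 0)).
    2: { intro k. destruct (Z.eqb_spec (Z.of_nat k) z0); destruct (Nat.eqb_spec k (Z.to_nat z0)); try reflexivity; lia. }
    rewrite (Series_ext (fun k => if Z.eqb (- Z.of_nat (S k)) z0 then x else 0) (fun _ => 0)).
    2: { intro k. destruct (Z.eqb_spec (- Z.of_nat (S k)) z0); try reflexivity; lia. }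
    rewrite Series_0 (is_series_unique _ _ (is_series_single x _)). ring.
  - rewrite (Series_ext _ (fun _ => 0)).
    2: { intro k. destruct (Z.eqb_spec (Z.of_nat k) z0); try reflexivity; lia. }
    rewrite (Series_ext (fun k => if Z.eqb (- Z.of_nat (S k)) z0 then x else 0) (fun k => if Nat.eqb k (Z.to_nat (- z0 - 1)) then x else 0)).
    2: { intro k. destruct (Z.eqb_spec (- Z.of_nat (S k)) z0); destruct (Nat.eqb_spec k (Z.to_nat (-z0-1))); try reflexivity; lia. }
    rewrite Series_0 (is_series_unique _ _ (is_series_single x _)). ring.
Qed.

Lemma sumZ_zero : sumZ (fun _ => 0) = 0.
Proof. rewrite /sumZ !Series_0. ring. Qed.

Lemma absZ_shift1 f : absZ f -> absZ (fun z => f (z + 1)%Z).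
Proof.
  intros [H1 H2]; split.
  - apply (ex_series_ext (fun k => Rabs (f (Z.of_nat (S k))))). intro k; do 2 f_equal; lia.
    by apply (ex_series_incr_1 (fun k => Rabs (f (Z.of_nat k)))).
  - apply (ex_series_ext (fun k => Rabs (f (- Z.of_nat k)%Z))). intro k; do 2 f_equal; lia.
    apply (ex_series_incr_1 (fun k => Rabs (f (- Z.of_nat k)%Z))).
    apply (ex_series_ext _ _ (fun k => f_equal Rabs (f_equal f (Logic.eq_refl _))) H2).
Qed.

Lemma absZ_shiftm1 f : absZ f -> absZ (fun z => f (z - 1)%Z).
Proof.
  intros [H1 H2]; split.
  - apply (ex_series_incr_1 (fun k => Rabs (f (Z.of_nat k - 1)%Z))).
    apply (ex_series_ext (fun k => Rabs (f (Z.of_nat k)))). intro k; do 2 f_equal; lia.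
    exact H1.
  - apply (ex_series_ext (fun k => Rabs (f (- Z.of_nat (S (S k)))%Z))). intro k; do 2 f_equal; lia.
    apply (ex_series_incr_1 (fun k => Rabs (f (- Z.of_nat (S k))%Z))). exact H2.
Qed.

Lemma sumZ_shift1 f : absZ f -> sumZ (fun z => f (z + 1)%Z) = sumZ f.
Proof.
  intro H. rewrite /sumZ.
  rewrite (Series_incr_1 (fun k => f (Z.of_nat k))); last by apply absZ_ex1.
  rewrite (Series_ext (fun k => f (Z.of_nat k + 1)%Z) (fun k => f (Z.of_nat (S k)))).
  2: { intro k; f_equal; lia. }
  rewrite (Series_ext (fun k => f (- Z.of_nat (S k) + 1)%Z) (fun k => f (- Z.of_nat k)%Z)).
  2: { intro k; f_equal; lia. }
  rewrite (Series_incr_1 (fun k => f (- Z.of_nat k)%Z)).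
  2: { apply (ex_series_incr_1 (fun k => f (- Z.of_nat k)%Z)). apply absZ_ex2 in H. exact H. }
  simpl. ring.
Qed.

Lemma sumZ_shift_nat f m : absZ f -> absZ (fun z => f (z + Z.of_nat m)%Z) /\ sumZ (fun z => f (z + Z.of_nat m)%Z) = sumZ f.
Proof.
  intro H. induction m as [|m [IH1 IH2]].
  - split. apply (absZ_ext f); [intro; f_equal; lia | exact H].
    apply sumZ_ext; intro; f_equal; lia.
  - have E : forall z, f (z + Z.of_nat (S m))%Z = (fun z => f (z + Z.of_nat m)%Z) (z + 1)%Z.
    { intro z; cbv beta; f_equal; lia. }
    split.
    + apply (absZ_ext _ _ (fun z => Logic.eq_sym (E z))). by apply (absZ_shift1 (fun z => f (z + Z.of_nat m)%Z)).
    + rewrite (sumZ_ext _ _ E) (sumZ_shift1 (fun z => f (z + Z.of_nat m)%Z)) //.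
Qed.

Lemma sumZ_shiftm_nat f m : absZ f -> absZ (fun z => f (z - Z.of_nat m)%Z).
Proof.
  intro H. induction m as [|m IH].
  - apply (absZ_ext f); [intro; f_equal; lia | exact H].
  - have E : forall z, (fun z => f (z - Z.of_nat m)%Z) (z - 1)%Z = f (z - Z.of_nat (S m))%Z.
    { intro z; cbv beta; f_equal; lia. }
    apply (absZ_ext _ _ E). by apply (absZ_shiftm1 (fun z => f (z - Z.of_nat m)%Z)).
Qed.

Lemma absZ_shift f t : absZ f -> absZ (fun z => f (z + t)%Z).
Proof.
  intro H. destruct (Z_le_gt_dec 0 t) as [Ht|Ht].
  - apply (absZ_ext (fun z => f (z + Z.of_nat (Z.to_nat t))%Z)). intro; f_equal; lia.
    by apply sumZ_shift_nat.
  - apply (absZ_ext (fun z => f (z - Z.of_nat (Z.to_nat (- t)))%Z)). intro; f_equal; lia.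
    by apply sumZ_shiftm_nat.
Qed.

Lemma sumZ_shift f t : absZ f -> sumZ (fun z => f (z + t)%Z) = sumZ f.
Proof.
  intro H. destruct (Z_le_gt_dec 0 t) as [Ht|Ht].
  - rewrite (sumZ_ext _ (fun z => f (z + Z.of_nat (Z.to_nat t))%Z)). 2: intro; f_equal; lia.
    by apply sumZ_shift_nat.
  - pose g := fun z => f (z + t)%Z.
    have Hg : absZ g by apply absZ_shift.
    have [_ E] := sumZ_shift_nat g (Z.to_nat (- t)) Hg.
    rewrite -E. apply sumZ_ext. intro z. rewrite /g. f_equal. lia.
Qed.

Definition dvdZ (M z : Z) : bool := Z.eqb (z mod M) 0.

Lemma modZ_pos M N i : (0 < M)%coq_nat -> (i < M)%coq_nat ->
  (Z.of_nat (M*N + i)%coq_nat mod Z.of_nat M)%Z = Z.of_nat i.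
Proof.
  intros HM Hi. symmetry. apply (Z.mod_unique_pos _ _ (Z.of_nat N)). lia. lia.
Qed.

Lemma modZ_neg M N i : (0 < M)%coq_nat -> (i < M)%coq_nat ->
  ((- Z.of_nat (S (M*N + i)%coq_nat)) mod Z.of_nat M)%Z = Z.of_nat (M - 1 - i)%coq_nat.
Proof.
  intros HM Hi. symmetry. apply (Z.mod_unique_pos _ _ (- Z.of_nat N - 1)). lia. lia.
Qed.

Lemma block_abs (u v : nat -> R) M i0 :
  (forall N i, (i < M)%coq_nat -> u (M*N + i)%coq_nat = if Nat.eqb i i0 then v N else 0) ->
  (forall N i, (i < M)%coq_nat -> Rabs (u (M*N + i)%coq_nat) = if Nat.eqb i i0 then Rabs (v N) else 0).
Proof.
  intros H N i Hi. rewrite H //. destruct (Nat.eqb i i0) => //. apply Rabs_R0.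
Qed.

Lemma block_both (u v : nat -> R) M i0 :
  (i0 < M)%coq_nat ->
  (forall N i, (i < M)%coq_nat -> u (M*N + i)%coq_nat = if Nat.eqb i i0 then v N else 0) ->
  ex_series (fun k => Rabs (u k)) ->
  ex_series (fun k => Rabs (v k)) /\ Series u = Series v.
Proof.
  intros Hi Hu Ha. split.
  - eexists. apply (block_series (fun k => Rabs (u k)) _ M i0 Hi); last exact Ha.
    by apply block_abs.
  - symmetry. apply is_series_unique. apply (block_series u v M i0 Hi Hu).
    by apply ex_series_Rabs.
Qed.

Lemma sumZ_dil f (M : nat) : (0 < M)%coq_nat -> absZ f ->
  absZ (fun t => f (Z.of_nat M * t)%Z) /\
  sumZ (fun z => if dvdZ (Z.of_nat M) z then f z else 0) = sumZ (fun t => f (Z.of_nat M * t)%Z).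
Proof.
  intros HM [H1 H2].
  have P1 := block_both (fun k => if dvdZ (Z.of_nat M) (Z.of_nat k) then f (Z.of_nat k) else 0)
     (fun N => f (Z.of_nat M * Z.of_nat N)%Z) M 0 HM.
  have P2 := block_both (fun k => if dvdZ (Z.of_nat M) (- Z.of_nat (S k)) then f (- Z.of_nat (S k))%Z else 0)
     (fun N => f (Z.of_nat M * (- Z.of_nat (S N)))%Z) M (M - 1)%coq_nat ltac:(lia).
  destruct P1 as [P1a P1b].
  { intros N i Hi. rewrite /dvdZ modZ_pos //.
    destruct (Nat.eqb_spec i 0); destruct (Z.eqb_spec (Z.of_nat i) 0); try lia.
    - f_equal. lia.
    - reflexivity. }
  { apply (ex_series_abs_le _ (fun k => Rabs (f (Z.of_nat k)))); last exact H1. intro k. destruct (dvdZ _ _).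
    apply Rle_refl. rewrite Rabs_R0. apply Rabs_pos. }
  destruct P2 as [P2a P2b].
  { intros N i Hi. rewrite /dvdZ modZ_neg //.
    destruct (Nat.eqb_spec i (M-1)%coq_nat); destruct (Z.eqb_spec (Z.of_nat (M - 1 - i)%coq_nat) 0); try lia.
    - f_equal. lia.
    - reflexivity. }
  { apply (ex_series_abs_le _ (fun k => Rabs (f (- Z.of_nat (S k))%Z))); last exact H2. intro k. destruct (dvdZ _ _).
    apply Rle_refl. rewrite Rabs_R0. apply Rabs_pos. }
  split.
  - split. exact P1a. exact P2a.
  - rewrite /sumZ P1b P2b. reflexivity.
Qed.

Section NT.
Local Open Scope Z_scope.
Variables c d : Z.
Hypothesis Hc : 0 < c.
Hypothesis Hd : 0 < d.

Lemma g_pos : 0 < Z.gcd c d.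
Proof.
  have := Z.gcd_nonneg c d. have : Z.gcd c d <> 0.
  { intro H. apply Z.gcd_eq_0 in H. lia. }
  lia.
Qed.

Lemma c_split : c = Z.gcd c d * (c / Z.gcd c d).
Proof. apply Z.div_exact. have := g_pos; lia. apply Z.mod_divide. have := g_pos; lia. apply Z.gcd_divide_l. Qed.
Lemma d_split : d = Z.gcd c d * (d / Z.gcd c d).
Proof. apply Z.div_exact. have := g_pos; lia. apply Z.mod_divide. have := g_pos; lia. apply Z.gcd_divide_r. Qed.
Lemma cd_coprime : Z.gcd (c / Z.gcd c d) (d / Z.gcd c d) = 1.
Proof. apply Z.gcd_div_gcd. have := g_pos; lia. reflexivity. Qed.

Lemma c1_pos : 0 < c / Z.gcd c d.
Proof. have := g_pos. have := c_split. nia. Qed.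
Lemma d1_pos : 0 < d / Z.gcd c d.
Proof. have := g_pos. have := d_split. nia. Qed.

Lemma dvd_xd x : (c | x * d) <-> (c / Z.gcd c d | x).
Proof.
  set g := Z.gcd c d. set c1 := c / g. set d1 := d / g.
  have Hg : 0 < g := g_pos. have Ec : c = g * c1 := c_split. have Ed : d = g * d1 := d_split.
  have Hcop : Z.gcd c1 d1 = 1 := cd_coprime.
  split.
  - intros [k Hk]. apply (Z.gauss _ d1); last exact Hcop.
    exists k. rewrite Ec Ed in Hk. nia.
  - intros [m Hm]. exists (m * d1). rewrite Hm Ec Ed. ring.
Qed.

Lemma dvd_b_diff a0 b0 a1 b1 n : a0 * d - b0 * c = n -> a1 * d - b1 * c = n ->
  (d / Z.gcd c d | b1 - b0).
Proof.
  set g := Z.gcd c d. set c1 := c / g. set d1 := d / g.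
  have Hg : 0 < g := g_pos. have Ec : c = g * c1 := c_split. have Ed : d = g * d1 := d_split.
  have Hcop : Z.gcd c1 d1 = 1 := cd_coprime.
  intros H0 H1.
  apply (Z.gauss _ c1). exists (a1 - a0). rewrite Ec Ed in H0 H1. nia.
  rewrite Z.gcd_comm. exact Hcop.
Qed.

Lemma solvable_gcd n : (Z.gcd c d | n) -> exists a b, a * d - b * c = n.
Proof.
  intros [q Hq].
  destruct (Z.gcd_bezout c d (Z.gcd c d) Logic.eq_refl) as [u [v Huv]].
  exists (v * q), (- (u * q)). rewrite Hq -Huv. ring.
Qed.

Lemma gcd_of_solvable n a b : a * d - b * c = n -> (Z.gcd c d | n).
Proof.
  intro H. rewrite -H. apply Z.divide_sub_r.
  apply Z.divide_mul_r, Z.gcd_divide_r. apply Z.divide_mul_r, Z.gcd_divide_l.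
Qed.

End NT.

Lemma absZ_aff al be P : 1 <= al -> (P <= -2)%Z -> absZ (fun t => powerRZ (al * IZR t + be) P).
Proof.
  intros Hal HP. split.
  - apply (ex_series_ext (fun k => Rabs (powerRZ (al * INR k + be) P))).
    intro k. by rewrite INR_IZR_INZ.
    by apply ex_series_pow_affine.
  - apply (ex_series_ext (fun k => Rabs (powerRZ (al * INR k + (al - be)) P))).
    intro k. rewrite !powerRZ_abs. f_equal. rewrite -Rabs_Ropp. f_equal.
    rewrite opp_IZR -INR_IZR_INZ S_INR. ring.
    by apply ex_series_pow_affine.
Qed.

Lemma absZ_single z0 x : absZ (fun z => if Z.eqb z z0 then x else 0).
Proof.
  have Hs : forall k0, ex_series (fun k => if Nat.eqb k k0 then Rabs x else 0).
  { intro k0. eexists. apply is_series_single. }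
  split.
  - apply (ex_series_abs_le _ (fun k => if Nat.eqb k (Z.to_nat z0) then Rabs x else 0)); last exact (Hs _). intro k.
    case: (Z.eqb_spec (Z.of_nat k) z0) => H; case: (Nat.eqb_spec k (Z.to_nat z0)) => H';
      try lia; rewrite ?Rabs_R0; have := Rabs_pos x; lra.
  - apply (ex_series_abs_le _ (fun k => if Nat.eqb k (Z.to_nat (- z0 - 1)) then Rabs x else 0)); last exact (Hs _). intro k.
    case: (Z.eqb_spec (- Z.of_nat (S k)) z0) => H; case: (Nat.eqb_spec k (Z.to_nat (- z0 - 1))) => H';
      try lia; rewrite ?Rabs_R0; have := Rabs_pos x; lra.
Qed.

Definition Gfull (n : Z) (d c : nat) (P : Z) (a : Z) : R :=
  if dvdZ (Z.of_nat c) (a * Z.of_nat d - n)%Z then powerRZ (IZR (a * Z.of_nat d - n)) P else 0.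

Lemma inner_b (n : Z) (d c : nat) (P : Z) (a : Z) : (0 < c)%N -> (P < 0)%Z ->
  sumZ (fun b =>
    if (a =? 0)%Z || (b =? 0)%Z then 0
    else if (a * Z.of_nat d - b * Z.of_nat c =? n)%Z
         then powerRZ (IZR (b * Z.of_nat c)) P else 0)
  = if (a =? 0)%Z then 0 else Gfull n d c P a.
Proof.
  intros Hc HP.
  case: (Z.eqb_spec a 0) => Ha.
  - rewrite (sumZ_ext _ (fun _ => 0)). apply sumZ_zero. intro b. by [].
  - rewrite /Gfull /dvdZ.
    case: (Z.eqb_spec ((a * Z.of_nat d - n) mod Z.of_nat c) 0) => Hm.
    + apply Z.div_exact in Hm; last lia.
      set b0 := ((a * Z.of_nat d - n) / Z.of_nat c)%Z in Hm.
      rewrite (sumZ_ext _ (fun b => if Z.eqb b b0 then powerRZ (IZR (a * Z.of_nat d - n)) P else 0)).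
      apply sumZ_single.
      intro b. rewrite /=.
      case: (Z.eqb_spec b 0) => Hb; case: (Z.eqb_spec (a * Z.of_nat d - b * Z.of_nat c) n) => He;
        case: (Z.eqb_spec b b0) => Hbb /=; try reflexivity; try nia.
      * have -> : (a * Z.of_nat d - n = 0)%Z by nia. by rewrite powerRZ_0_neg.
      * f_equal. f_equal. lia.
    + rewrite (sumZ_ext _ (fun _ => 0)). apply sumZ_zero.
      intro b. rewrite /=.
      case: (Z.eqb_spec b 0) => Hb; case: (Z.eqb_spec (a * Z.of_nat d - b * Z.of_nat c) n) => He /=;
        try reflexivity.
      exfalso. apply Hm. apply Z.mod_divide. lia. exists b. lia.
Qed.

Lemma inner_eq (n : Z) (d c : nat) (P : Z) : (0 < c)%N -> (0 < d)%N -> (P <= -2)%Z ->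
  inner_sum n d c P = sumZ (Gfull n d c P) - Gfull n d c P 0.
Proof.
  intros Hc Hd HP. rewrite /inner_sum.
  rewrite (sumZ_ext _ (fun a => Gfull n d c P a - (if Z.eqb a 0 then Gfull n d c P 0 else 0))).
  - rewrite sumZ_minus. by rewrite sumZ_single.
    + apply (absZ_le _ (fun a => powerRZ (INR d * IZR a + IZR (- n)) P)).
      * intro a. rewrite /Gfull. case: (dvdZ _ _).
        -- right. f_equal. f_equal. rewrite minus_IZR mult_IZR -INR_IZR_INZ opp_IZR. ring.
        -- rewrite Rabs_R0. apply Rabs_pos.
      * apply absZ_aff; last lia. apply (le_INR 1 d). lia.
    + apply absZ_single.
  - intro a. rewrite inner_b //; last lia.
    case: (Z.eqb_spec a 0) => Ha. subst a. ring. ring.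
Qed.

Lemma absZ_Gfull (n : Z) (d c : nat) (P : Z) : (0 < d)%N -> (P <= -2)%Z -> absZ (Gfull n d c P).
Proof.
  intros Hd HP.
  apply (absZ_le _ (fun a => powerRZ (INR d * IZR a + IZR (- n)) P)).
  * intro a. rewrite /Gfull. case: (dvdZ _ _).
    -- right. f_equal. f_equal. rewrite minus_IZR mult_IZR -INR_IZR_INZ opp_IZR. ring.
    -- rewrite Rabs_R0. apply Rabs_pos.
  * apply absZ_aff; last lia. apply (le_INR 1 d). lia.
Qed.

Lemma dvdZ_spec M z : M <> 0%Z -> dvdZ M z = true <-> (M | z)%Z.
Proof. intro HM. rewrite /dvdZ Z.eqb_eq. by apply Z.mod_divide. Qed.

Lemma Gfull_sum (n : Z) (d c : nat) (P : Z) (a0 b0 : Z) :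
  (0 < c)%N -> (0 < d)%N -> (P <= -2)%Z ->
  (a0 * Z.of_nat d - b0 * Z.of_nat c = n)%Z ->
  sumZ (Gfull n d c P) =
  powerRZ (INR c * INR d / IZR (Z.gcd (Z.of_nat c) (Z.of_nat d))) P *
  sumZ (fun t => powerRZ (IZR t + IZR b0 * IZR (Z.gcd (Z.of_nat c) (Z.of_nat d)) / INR d) P).
Proof.
  intros Hc Hd HP Hab.
  set C := Z.of_nat c. set D := Z.of_nat d.
  have HC : (0 < C)%Z by rewrite /C; lia.
  have HD : (0 < D)%Z by rewrite /D; lia.
  set g := Z.gcd C D.
  have Hg : (0 < g)%Z := g_pos C D HD.
  have Ec : C = (g * (C / g))%Z := c_split C D HD.
  set c1 := (C / g)%Z.
  have Hc1 : (0 < c1)%Z := c1_pos C D HC HD.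
  have HG := absZ_Gfull n d c P Hd HP.
  rewrite -(sumZ_shift _ a0 HG).
  pose H := fun x : Z => powerRZ (IZR (x * D + b0 * C)) P.
  have HH : absZ H.
  { apply (absZ_ext (fun x => powerRZ (INR d * IZR x + IZR (b0 * C)) P)).
    intro x. rewrite /H. f_equal. rewrite plus_IZR !mult_IZR /D -INR_IZR_INZ. ring.
    apply absZ_aff; last lia. apply (le_INR 1 d). lia. }
  rewrite (sumZ_ext _ (fun x => if dvdZ (Z.of_nat (Z.to_nat c1)) x then H x else 0)).
  2: { intro x. rewrite /Gfull /H.
       have E : ((x + a0) * D - n = x * D + b0 * C)%Z by rewrite -Hab; nia.
       rewrite E.
       have -> : dvdZ C (x * D + b0 * C) = dvdZ (Z.of_nat (Z.to_nat c1)) x.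
       { apply Bool.eq_iff_eq_true. rewrite !dvdZ_spec; try lia.
         rewrite Z2Nat.id; last lia.
         rewrite -(dvd_xd C D HD x).
         split => Hdv.
         - apply (Z.divide_add_cancel_r C (b0 * C) (x * D)). exists b0; ring.
           by rewrite Z.add_comm.
         - apply Z.divide_add_r. exact Hdv. exists b0; ring. }
       reflexivity. }
  rewrite (proj2 (sumZ_dil H (Z.to_nat c1) ltac:(lia) HH)).
  rewrite -sumZ_scal. apply sumZ_ext => t.
  rewrite /H -powerRZ_mult. f_equal.
  rewrite Z2Nat.id; last lia.
  have Hgr : IZR g <> 0 by apply not_0_IZR; lia.
  have Hdr : INR d <> 0 by apply not_0_INR; lia.
  rewrite (_ : INR c = IZR C); last by rewrite /C INR_IZR_INZ.
  rewrite (_ : INR d = IZR D); last by rewrite /D INR_IZR_INZ.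
  rewrite (_ : INR d = IZR D) in Hdr; last by rewrite /D INR_IZR_INZ.
  rewrite Ec !plus_IZR !mult_IZR. rewrite /c1. field. split; assumption.
Qed.

Lemma Gfull_zero (n : Z) (d c : nat) (P : Z) :
  (0 < c)%N -> (0 < d)%N ->
  ~ (Z.gcd (Z.of_nat c) (Z.of_nat d) | n)%Z -> sumZ (Gfull n d c P) = 0.
Proof.
  intros Hc Hd Hn. rewrite (sumZ_ext _ (fun _ => 0)). apply sumZ_zero.
  intro a. rewrite /Gfull.
  case E: (dvdZ _ _) => //.
  apply dvdZ_spec in E; last lia.
  exfalso. apply Hn. destruct E as [b Hb].
  apply (gcd_of_solvable (Z.of_nat c) (Z.of_nat d) n a b). lia.
Qed.

Lemma exists_min (Q : Z -> Prop) : (exists b, Q b) ->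
  exists b, Q b /\ forall b', Q b' -> (Z.abs b <= Z.abs b')%Z.
Proof.
  intros [b Hb].
  have key : forall N b, Z.abs_nat b = N -> Q b ->
     exists b0, Q b0 /\ forall b', Q b' -> (Z.abs b0 <= Z.abs b')%Z.
  { intro N. induction N as [N IH] using lt_wf_ind. intros b1 E Hb1.
    destruct (classic (forall b', Q b' -> (Z.abs b1 <= Z.abs b')%Z)) as [H|H].
    - exists b1; split; assumption.
    - destruct (not_all_ex_not _ _ H) as [b2 H2].
      apply imply_to_and in H2. destruct H2 as [Q2 H2].
      exact (IH (Z.abs_nat b2) ltac:(lia) b2 Logic.eq_refl Q2). }
  exact (key _ b Logic.eq_refl Hb).
Qed.

Lemma bstar_spec n c d : (exists a b, a * Z.of_nat d - b * Z.of_nat c = n)%Z ->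
  exists a, (a * Z.of_nat d - bstar n c d * Z.of_nat c = n)%Z.
Proof.
  intros [a [b H]]. unfold bstar.
  match goal with |- context [epsilon ?i ?Q] => have Hs := epsilon_spec i Q end.
  apply Hs. apply (exists_min (fun b => exists a, (a * Z.of_nat d - b * Z.of_nat c = n)%Z)).
  by exists b, a.
Qed.

Lemma gcdn_Z a b : Z.of_nat (gcdn a b) = Z.gcd (Z.of_nat a) (Z.of_nat b).
Proof. lia. Qed.

Lemma M_formula n d c P r2 a0 b0 : (0 < c)%N -> (0 < d)%N -> (P <= -2)%Z ->
  (a0 * Z.of_nat d - b0 * Z.of_nat c = n)%Z ->
  Rpower (INR c) r2 * sumZ (Gfull n d c P) =
  Rpower (INR c) (r2 + IZR P) * (powerRZ (INR d) P / powerRZ (INR (gcdn c d)) P *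
    sumZ (fun t => powerRZ (IZR t + IZR b0 * INR (gcdn c d) / INR d) P)).
Proof.
  intros Hc Hd HP Hab.
  rewrite (Gfull_sum n d c P a0 b0) //.
  have Eg : IZR (Z.gcd (Z.of_nat c) (Z.of_nat d)) = INR (gcdn c d) by rewrite INR_IZR_INZ gcdn_Z.
  rewrite Eg.
  have Hcp : 0 < INR c by apply lt_0_INR; lia.
  rewrite /Rdiv !powerRZ_mult powerRZ_inv' Rpower_plus -powerRZ_Rpower //.
  ring.
Qed.

Lemma pow_m1 m : (-1) ^ m = if Z.even (Z.of_nat m) then 1 else -1.
Proof.
  induction m as [|m IH]. simpl. reflexivity.
  change ((-1) ^ (S m)) with (-1 * (-1) ^ m). rewrite IH Nat2Z.inj_succ Z.even_succ -Z.negb_even.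
  case: (Z.even (Z.of_nat m)) => /=; ring.
Qed.

Lemma powerRZ_m1 P : powerRZ (-1) P = if Z.even P then 1 else -1.
Proof.
  have Hn : forall p, Z.even (Z.neg p) = Z.even (Z.pos p) by intro p; rewrite -Pos2Z.opp_pos Z.even_opp.
  destruct P as [|p|p]; rewrite /powerRZ. reflexivity.
  - rewrite pow_m1 positive_nat_Z. reflexivity.
  - rewrite pow_m1 positive_nat_Z Hn.
    case: (Z.even (Z.pos p)). apply Rinv_1.
    field.
Qed.

Lemma Z0_value P : (P <= -2)%Z ->
  sumZ (fun t => powerRZ (IZR t) P) = 2 * delta_even P * zeta (IZR (- P)).
Proof.
  intro HP. rewrite /sumZ /zeta.
  rewrite Series_incr_1_aux. 2: { simpl. apply powerRZ_0_neg. lia. }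
  rewrite (Series_ext (fun k => powerRZ (IZR (Z.of_nat (S k))) P) (fun k => Rpower (INR (S k)) (- IZR (- P)))).
  2: { intro k. rewrite -INR_IZR_INZ powerRZ_Rpower. f_equal. rewrite opp_IZR. ring.
       apply lt_0_INR. lia. }
  rewrite (Series_ext (fun k => powerRZ (IZR (- Z.of_nat (S k))) P) (fun k => powerRZ (-1) P * Rpower (INR (S k)) (- IZR (- P)))).
  2: { intro k. rewrite opp_IZR -INR_IZR_INZ.
       rewrite (_ : - INR (S k) = -1 * INR (S k)); last ring.
       rewrite powerRZ_mult (powerRZ_Rpower (INR (S k))). f_equal. f_equal. rewrite opp_IZR. ring.
       apply lt_0_INR. lia. }
  rewrite Series_scal_l powerRZ_m1 /delta_even.
  case: (Z.even P); ring.
Qed.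

Lemma dvdn_Z a b : (0 < a)%N -> (a %| b) = dvdZ (Z.of_nat a) (Z.of_nat b).
Proof.
  intro Ha. apply Bool.eq_iff_eq_true. rewrite dvdZ_spec; last lia. split.
  - move/dvdnP => [k ->]. exists (Z.of_nat k). lia.
  - intros [z Hz]. have Hz0 : (0 <= z)%Z by nia.
    apply/dvdnP. exists (Z.to_nat z). apply Nat2Z.inj. rewrite Hz. 
    rewrite (_ : Z.of_nat (Z.to_nat z * a) = Z.of_nat (Z.to_nat z) * Z.of_nat a)%Z; last lia.
    rewrite Z2Nat.id //.
Qed.

Lemma ps_const_after u N M : (forall k, (N <= k)%coq_nat -> u k = 0) -> (N <= M)%coq_nat -> ps u M = ps u N.
Proof.
  intros H HM. induction M as [|M IH].
  - have -> : N = 0%N by lia. reflexivity.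
  - destruct (Nat.eq_dec N (S M)) as [E|E]. by rewrite E.
    rewrite /= IH; last lia. rewrite H; last lia. ring.
Qed.

Lemma Series_fin u N : (forall k, (N <= k)%coq_nat -> u k = 0) -> Series u = ps u N.
Proof.
  intro H. apply is_series_unique. apply is_series_ps.
  apply (is_lim_seq_ext_loc (fun _ => ps u N)).
  - exists N. intros M HM. symmetry. by apply ps_const_after.
  - apply is_lim_seq_const.
Qed.

Lemma ex_series_fin u N : (forall k, (N <= k)%coq_nat -> u k = 0) -> ex_series u.
Proof.
  intro H. exists (ps u N). apply is_series_ps.
  apply (is_lim_seq_ext_loc (fun _ => ps u N)).
  - exists N. intros M HM. symmetry. by apply ps_const_after.
  - apply is_lim_seq_const.
Qed.

Lemma ps_foldr h N : forall a, ps (fun k => h (a + k)%coq_nat) N = foldr Rplus 0 (map h (iota a N)).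
Proof.
  induction N as [|N IH]; intro a. reflexivity.
  rewrite (_ : S N = (1 + N)%coq_nat); last lia.
  rewrite ps_add /=. rewrite -(IH (S a)).
  rewrite (ps_ext _ (fun k => h (S a + k)%coq_nat)). rewrite Nat.add_0_r. ring.
  intros i _. f_equal. lia.
Qed.

Lemma foldr_filter (p : pred nat) F l :
  foldr Rplus 0 (map F (filter p l)) = foldr Rplus 0 (map (fun c => if p c then F c else 0) l).
Proof.
  induction l as [|x l IH]. reflexivity.
  rewrite /=. case: (p x) => /=; rewrite IH; ring.
Qed.

Lemma foldr_scal (X : R) (F : nat -> R) l :
  foldr Rplus 0 (map (fun c => X * F c) l) = X * foldr Rplus 0 (map F l).
Proof. induction l as [|x l IH]; rewrite /=. ring. rewrite IH. ring. Qed.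

Lemma divisors_iota N : (0 < N)%N -> divisors N = [seq c <- iota 1 N | c %| N].
Proof.
  intro HN. apply (irr_sorted_eq (leT := ltn)).
  - exact ltn_trans.
  - exact ltnn.
  - apply sorted_divisors_ltn.
  - apply sorted_filter. exact ltn_trans. apply iota_ltn_sorted.
  - intro c. rewrite mem_filter mem_iota -dvdn_divisors //.
    case Hc: (c %| N) => //=. symmetry.
    have := dvdn_leq HN Hc. destruct c. rewrite dvd0n in Hc. move/eqP: Hc. lia.
    lia.
Qed.

Lemma sigma_part n d P r2 : n <> 0%Z -> (P < 0)%Z ->
  Series (fun k => Rpower (INR (S k)) r2 * Gfull n d (S k) P 0) = powerRZ (IZR (- n)) P * Defs.sigma r2 n.
Proof.
  intros Hn HP. set N := Z.abs_nat n.
  have HN : (0 < N)%N by rewrite /N; lia.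
  have E : forall c, (0 < c)%N -> Gfull n d c P 0 = if c %| N then powerRZ (IZR (- n)) P else 0.
  { intros c Hc. rewrite /Gfull.
    rewrite (_ : (0 * Z.of_nat d - n = - n)%Z); last ring.
    rewrite (dvdn_Z c N Hc).
    have -> : dvdZ (Z.of_nat c) (- n) = dvdZ (Z.of_nat c) (Z.of_nat N).
    { apply Bool.eq_iff_eq_true. rewrite !dvdZ_spec; try lia.
      rewrite Z.divide_opp_r /N Nat2Z.inj_abs_nat Z.divide_abs_r. reflexivity. }
    reflexivity. }
  rewrite (Series_fin _ N).
  2: { intros k Hk. rewrite E //. case Hd: (S k %| N). have := dvdn_leq HN Hd. lia. ring. }
  rewrite (ps_foldr (fun c => Rpower (INR c) r2 * Gfull n d c P 0) N 1).
  rewrite /Defs.sigma divisors_iota // foldr_filter -foldr_scal.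
  congr (foldr Rplus 0 _). apply eq_in_map => c. rewrite mem_iota => Hc.
  rewrite E; last lia. case: (c %| N); ring.
Qed.

Lemma ex_abs_dom (u w : nat -> R) : ex_series (fun k => Rabs (w k)) ->
  (forall k, Rabs (u k) <= Rabs (w k)) -> ex_series (fun k => Rabs (u k)).
Proof. intros Hw H. exact (ex_series_abs_le u _ H Hw). Qed.

Lemma split_mult (w : nat -> R) p : (0 < p)%N -> ex_series (fun k => Rabs (w (S k))) ->
  Series (fun k => w (S k)) =
  Series (fun k => if p %| S k then 0 else w (S k)) + Series (fun j => w (p * S j)%N).
Proof.
  intros Hp Hw.
  have Hd : ex_series (fun k => Rabs (if p %| S k then w (S k) else 0)).
  { apply (ex_abs_dom _ _ Hw). intro k. case: (p %| S k). apply Rle_refl. rewrite Rabs_R0; apply Rabs_pos. }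
  have Hn : ex_series (fun k => Rabs (if p %| S k then 0 else w (S k))).
  { apply (ex_abs_dom _ _ Hw). intro k. case: (p %| S k). rewrite Rabs_R0; apply Rabs_pos. apply Rle_refl. }
  have Hblk : forall N i, (i < p)%coq_nat ->
      (fun k => if p %| S k then w (S k) else 0) (p * N + i)%coq_nat =
      (if Nat.eqb i (p - 1)%coq_nat then (fun j => w (p * S j)%N) N else 0).
  { intros N i Hi. cbv beta.
    have E : (S (p * N + i)%coq_nat) = (p * N + S i)%N by lia.
    rewrite E dvdn_addr; last by apply dvdn_mulr.
    case: (Nat.eqb_spec i (p - 1)%coq_nat) => Hi'.
    + have -> : (S i) = p by lia. rewrite dvdnn. f_equal. lia.
    + case Hdv: (p %| S i) => //. have := dvdn_leq (ltn0Sn i) Hdv. lia. }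
  have Hb := proj2 (block_both _ _ p (p - 1)%coq_nat ltac:(lia) Hblk Hd).
  rewrite -Hb -Series_plus. apply Series_ext. intro k. case: (p %| S k); ring.
  by apply ex_series_Rabs. by apply ex_series_Rabs.
Qed.

Section Euler.
Variables (r2 : R) (P : Z).
Hypothesis HP : (P <= -2)%Z.
Hypothesis Hs : r2 + IZR P <= -2.

Definition wE (m c : nat) : R := Rpower (INR c) (r2 + IZR P) / powerRZ (INR (gcdn c m)) P.
Definition EA (m : nat) : R := Series (fun k => wE m (S k)).
Definition Lf (p v : nat) : R :=
  1 + (1 - powerRZ (INR p) P) * foldr Rplus 0 (map (fun k => Rpower (INR p) (INR k * r2)) (iota 1 v)).

Lemma INR_pos_nat c : (0 < c)%N -> 0 < INR c.
Proof. intro; apply lt_0_INR; lia. Qed.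

Lemma inv_powerRZ x : 0 < x -> / powerRZ x P = Rpower x (- IZR P).
Proof. intro Hx. by rewrite powerRZ_Rpower // Rpower_Ropp. Qed.

Lemma wE_abs m : (0 < m)%N -> ex_series (fun k => Rabs (wE m (S k))).
Proof.
  intro Hm.
  apply (ex_series_abs_le _ (fun k => Rpower (INR m) (- IZR P) * Rpower (INR (S k)) (r2 + IZR P))).
  2: { apply (ex_series_scal_l (Rpower (INR m) (- IZR P)) (fun k => Rpower (INR (S k)) (r2 + IZR P))). by apply ex_series_Rpower. }
  intro k. rewrite /wE.
  have Hg : (0 < gcdn k.+1 m)%N by rewrite gcdn_gt0.
  have Hgm : (gcdn k.+1 m <= m)%N by apply dvdn_leq => //; apply dvdn_gcdr.
  rewrite /Rdiv inv_powerRZ; last by apply INR_pos_nat.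
  rewrite Rabs_pos_eq; last (apply Rmult_le_pos; apply Rlt_le, exp_pos).
  rewrite Rmult_comm. apply Rmult_le_compat_r. apply Rlt_le, exp_pos.
  apply Rle_Rpower_l. have := IZR_le _ _ HP. lra.
  split. by apply INR_pos_nat. apply le_INR. lia.
Qed.

Lemma wE_notdiv p m v c : prime p -> ~~ (p %| c) -> wE (p ^ v * m) c = wE m c.
Proof.
  intros Hp Hc. rewrite /wE. do 3 f_equal.
  apply Gauss_gcdr. apply coprimeXr. rewrite coprime_sym prime_coprime //.
Qed.

Lemma wE_div0 p m j : prime p -> coprime p m -> (0 < j)%N ->
  wE m (p * j) = Rpower (INR p) (r2 + IZR P) * wE m j.
Proof.
  intros Hp Hpm Hj. rewrite /wE.
  have -> : gcdn (p * j) m = gcdn j m.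
  { rewrite gcdnC (gcdnC j). apply Gauss_gcdr. by rewrite coprime_sym. }
  rewrite mult_INR -Rpower_mult_distr. rewrite /Rdiv. ring.
  apply INR_pos_nat. apply prime_gt0 => //. by apply INR_pos_nat.
Qed.

Lemma wE_divS p m v j : prime p -> (0 < j)%N ->
  wE (p ^ (S v) * m) (p * j) = Rpower (INR p) r2 * wE (p ^ v * m) j.
Proof.
  intros Hp Hj. rewrite /wE.
  have -> : gcdn (p * j) (p ^ (S v) * m) = (p * gcdn j (p ^ v * m))%N.
  { by rewrite expnS -mulnA muln_gcdr. }
  have Hp0 : 0 < INR p by apply INR_pos_nat, prime_gt0.
  have Hg : 0 < INR (gcdn j (p ^ v * m)) by apply INR_pos_nat; rewrite gcdn_gt0 Hj.
  rewrite !mult_INR -Rpower_mult_distr //; last by apply INR_pos_nat.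
  rewrite powerRZ_mult /Rdiv Rinv_mult Rpower_plus (powerRZ_Rpower (INR p)) //.
  field. repeat split; apply Rgt_not_eq; first [apply exp_pos | apply powerRZ_lt; lra].
Qed.

Lemma EA_step0 p m : prime p -> coprime p m -> (0 < m)%N ->
  EA m = Series (fun k => if p %| S k then 0 else wE m (S k)) + Rpower (INR p) (r2 + IZR P) * EA m.
Proof.
  intros Hp Hpm Hm. rewrite /EA.
  rewrite {1}(split_mult (wE m) p (prime_gt0 Hp) (wE_abs _ Hm)).
  f_equal. rewrite -Series_scal_l. apply Series_ext => j. by rewrite wE_div0.
Qed.

Lemma EA_stepS p m v : prime p -> (0 < m)%N ->
  EA (p ^ (S v) * m) = Series (fun k => if p %| S k then 0 else wE m (S k)) + Rpower (INR p) r2 * EA (p ^ v * m).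
Proof.
  intros Hp Hm. rewrite /EA.
  have Hpos : (0 < p ^ (S v) * m)%N by rewrite muln_gt0 Hm expn_gt0 prime_gt0.
  rewrite (split_mult (wE (p ^ (S v) * m)) p (prime_gt0 Hp) (wE_abs _ Hpos)).
  f_equal.
  - apply Series_ext => k. case Hk: (p %| S k) => //. rewrite wE_notdiv //. by rewrite Hk.
  - rewrite -Series_scal_l. apply Series_ext => j. by rewrite wE_divS.
Qed.

Lemma Lf_rec p v : (0 < p)%N ->
  Lf p (S v) = (1 - Rpower (INR p) r2 * powerRZ (INR p) P) + Rpower (INR p) r2 * Lf p v.
Proof.
  intro Hp. rewrite /Lf.
  have -> : iota 1 (S v) = 1%N :: iota (1 + 1) v by [].
  rewrite (iotaDl 1 1 v) /=.
  have Hsh : forall (F : nat -> R) l, foldr Rplus 0 (map F (map (addn 1) l)) = foldr Rplus 0 (map (fun k => F (1 + k)%N) l).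
  { intros F l. induction l as [|x l IH] => //=. by rewrite IH. }
  rewrite Hsh.
  rewrite (_ : foldr Rplus 0 [seq Rpower (INR p) (INR (1 + k)%N * r2) | k <- iota 1 v] =
               foldr Rplus 0 [seq Rpower (INR p) r2 * Rpower (INR p) (INR k * r2) | k <- iota 1 v]).
  2: { congr (foldr Rplus 0 _). apply eq_map => k. rewrite -Rpower_plus. f_equal. rewrite plus_INR /=. ring. }
  rewrite foldr_scal. rewrite Rmult_1_l. ring.
Qed.

Lemma EA_pow p m v : prime p -> coprime p m -> (0 < m)%N ->
  EA (p ^ v * m) = Lf p v * EA m.
Proof.
  intros Hp Hpm Hm.
  have H0 := EA_step0 p m Hp Hpm Hm.
  have Hp0 : (0 < p)%N by apply prime_gt0.
  induction v as [|v IH].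
  - rewrite expn0 mul1n /Lf /=. ring.
  - rewrite EA_stepS // IH Lf_rec //.
    have Hps : Rpower (INR p) (r2 + IZR P) = Rpower (INR p) r2 * powerRZ (INR p) P.
    { rewrite Rpower_plus powerRZ_Rpower //. by apply INR_pos_nat. }
    rewrite Hps in H0.
    set N0 := Series _ in H0 *.
    have -> : N0 = (1 - Rpower (INR p) r2 * powerRZ (INR p) P) * EA m by lra.
    ring.
Qed.

Lemma EA_1 : EA 1 = zeta (- r2 - IZR P).
Proof.
  rewrite /EA /zeta. apply Series_ext => k. rewrite /wE gcdn1 /= powerRZ_R1 /Rdiv Rinv_1 Rmult_1_r.
  f_equal. ring.
Qed.


Lemma primes_split d p m : prime p -> (1 < d)%N -> p = pdiv d -> coprime p m ->
  d = (m * p ^ logn p d)%N -> primes d = p :: primes m.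
Proof.
  intros Hp Hd Ep Hpm Hdm.
  have Hv : (0 < logn p d)%N by rewrite logn_gt0 mem_primes Hp Ep pdiv_dvd; lia.
  have Hm : (0 < m)%N. { destruct m. rewrite mul0n in Hdm. lia. done. }
  apply (irr_sorted_eq (leT := ltn)). exact ltn_trans. exact ltnn.
  - apply sorted_primes.
  - rewrite /= (path_sortedE ltn_trans) sorted_primes andbT.
    apply/allP => q. rewrite mem_primes => /and3P [Hq _ Hqm].
    have Hqd : (q %| d) by rewrite Hdm; apply dvdn_mulr.
    have Hle : (p <= q)%N by rewrite Ep; apply pdiv_min_dvd => //; apply prime_gt1.
    have Hne : p != q.
    { apply/negP => /eqP E. move: Hpm. rewrite prime_coprime // E Hqm. done. }
    rewrite ltn_neqAle Hne Hle. done.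
  - intro q. rewrite in_cons !mem_primes.
    case Hq: (prime q) => /=.
    + have -> : (0 < d)%N by lia. have -> : (0 < m)%N by [].
      have -> : (q %| d) = (q %| m * p ^ logn p d) by rewrite -Hdm.
      rewrite Euclid_dvdM // Euclid_dvdX // (dvdn_prime2 Hq Hp) Hv andbT /=.
      by rewrite orbC.
    + case E: (q == p) => //. move/eqP: E => E. by rewrite E Hp in Hq.
Qed.

Lemma EA_euler d : (0 < d)%N -> EA d = zeta (- r2 - IZR P) * euler_prod d r2 P.
Proof.
  induction d as [d IH] using lt_wf_ind. intro Hd.
  case: (Nat.eq_dec d 1) => Hd1.
  - subst d. rewrite EA_1 /euler_prod. have -> : primes 1 = [::] by []. simpl. ring.
  - have Hd2 : (1 < d)%N by lia.
    set p := pdiv d.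
    have Hp : prime p := pdiv_prime Hd2.
    destruct (pfactor_coprime Hp Hd) as [m Hpm Hdm].
    have Hv : (0 < logn p d)%N by rewrite logn_gt0 mem_primes Hp pdiv_dvd; lia.
    have Hm : (0 < m)%N. { destruct m. rewrite mul0n in Hdm. lia. done. }
    have Hpv : (p <= p ^ logn p d)%N.
    { apply dvdn_leq. by rewrite expn_gt0 prime_gt0. rewrite -{1}(expn1 p). apply dvdn_exp2l. done. }
    have Hp2 := prime_gt1 Hp.
    have Hmd : (m < d)%coq_nat.
    { have H2 : (m * 2 <= m * p ^ logn p d)%N by rewrite leq_mul2l; apply/orP; right; lia.
      rewrite -Hdm in H2. lia. }
    rewrite {1}Hdm mulnC EA_pow // (IH m Hmd Hm).
    rewrite /euler_prod (primes_split d p m Hp Hd2 ltac:(reflexivity) Hpm Hdm) /=.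
    set L := 1 + _.
    have -> : L = Lf p (logn p d) by [].
    have -> : [seq 1 + (1 - powerRZ (INR q) P) *
                  foldr Rplus 0 [seq Rpower (INR q) (INR k * r2) | k <- iota 1 (logn q d)]
              | q <- primes m] =
              [seq 1 + (1 - powerRZ (INR q) P) *
                  foldr Rplus 0 [seq Rpower (INR q) (INR k * r2) | k <- iota 1 (logn q m)]
              | q <- primes m].
    { apply eq_in_map => q. rewrite mem_primes => /and3P [Hq _ Hqm].
      have -> : logn q d = logn q m.
      { rewrite Hdm lognM // ?expn_gt0 ?prime_gt0 // lognX (logn_prime q Hp).
        have -> : (q == p) = false.
        { apply/negP => /eqP E. move: Hpm. by rewrite prime_coprime // -E Hqm. }
        by rewrite muln0 addn0. }
      done. }
    ring.
Qed.

End Euler.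

Lemma Series_foldr (l : seq nat) (h : nat -> nat -> R) :
  (forall c, c \in l -> ex_series (h c)) ->
  ex_series (fun k => foldr Rplus 0 (map (fun c => h c k) l)) /\
  Series (fun k => foldr Rplus 0 (map (fun c => h c k) l)) = foldr Rplus 0 (map (fun c => Series (h c)) l).
Proof.
  induction l as [|x l IH]; intro Hl.
  - split. apply (ex_series_fin _ 0). by []. rewrite /=. apply Series_0.
  - have [IH1 IH2] : ex_series (fun k => foldr Rplus 0 (map (fun c => h c k) l)) /\
      Series (fun k => foldr Rplus 0 (map (fun c => h c k) l)) = foldr Rplus 0 (map (fun c => Series (h c)) l).
    { apply IH => c Hc. apply Hl. by rewrite in_cons Hc orbT. }
    have Hx : ex_series (h x) by apply Hl; rewrite in_cons eqxx.
    split.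
    + rewrite /=. apply (ex_series_plus _ _ Hx IH1).
    + rewrite /= Series_plus // IH2. reflexivity.
Qed.

Lemma foldr_pick x (F : nat -> R) len : forall a,
  foldr Rplus 0 (map (fun c => if x == c then F c else 0) (iota a len)) =
  if (a <= x)%N && (x < a + len)%N then F x else 0.
Proof.
  induction len as [|len IH] => a.
  - rewrite /=. have -> : ((a <= x)%N && (x < a + 0)%N) = false by lia. done.
  - rewrite /= IH. case: (x =P a) => [->|Hne].
    + have -> : ((a.+1 <= a)%N && (a < a.+1 + len)%N) = false by lia.
      have -> : ((a <= a)%N && (a < a + len.+1)%N) = true by lia.
      ring.
    + have -> : ((a.+1 <= x)%N && (x < a.+1 + len)%N) = ((a <= x)%N && (x < a + len.+1)%N) by lia.
      ring.
Qed.

Lemma residue_series (phi : R) s c' d : (0 < d)%N -> (1 <= c')%N -> (c' <= d)%N -> s <= -2 ->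
  ex_series (fun k => if (k %% d + 1 == c')%N then Rpower (INR (S k)) s * phi else 0) /\
  Series (fun k => if (k %% d + 1 == c')%N then Rpower (INR (S k)) s * phi else 0) =
  phi * (Rpower (INR d) s * hurwitz_zeta (- s) (INR c' / INR d)).
Proof.
  intros Hd Hc1 Hc2 Hs.
  set hh := fun k => _.
  have Hblk : forall N i, (i < d)%coq_nat -> hh (d * N + i)%coq_nat =
     (if Nat.eqb i (c' - 1)%coq_nat then (fun j => Rpower (INR (S (d * j + (c' - 1))%coq_nat)) s * phi) N else 0).
  { intros N i Hi. rewrite /hh.
    have -> : ((d * N + i)%coq_nat %% d)%N = i.
    { change ((d * N + i)%coq_nat) with (addn (muln d N) i). rewrite mulnC modnMDl modn_small //. lia. }
    case: (Nat.eqb_spec i (c' - 1)%coq_nat) => E.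
    - have -> : (i + 1 == c')%N = true by lia. subst i. reflexivity.
    - have -> : (i + 1 == c')%N = false by lia. reflexivity. }
  have Habs : ex_series (fun k => Rabs (hh k)).
  { apply (ex_series_abs_le _ (fun k => Rabs phi * Rpower (INR (S k)) s)).
    - intro k. rewrite /hh. case: (_ == _).
      + rewrite Rabs_mult Rabs_pos_eq. lra. apply Rlt_le, exp_pos.
      + rewrite Rabs_R0. apply Rmult_le_pos. apply Rabs_pos. apply Rlt_le, exp_pos.
    - apply (ex_series_scal_l (Rabs phi) (fun k => Rpower (INR (S k)) s)). by apply ex_series_Rpower. }
  have [_ Hb] := block_both hh _ d (c' - 1)%coq_nat ltac:(lia) Hblk Habs.
  split. by apply ex_series_Rabs.
  rewrite Hb /hurwitz_zeta -!Series_scal_l. apply Series_ext => j.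
  have Hdp : 0 < INR d by apply lt_0_INR; lia.
  have Hj : 0 < INR j + INR c' / INR d.
  { have := pos_INR j. have : 0 < INR c' by apply lt_0_INR; lia. intros. 
    have : 0 < INR c' / INR d by apply Rdiv_lt_0_compat. lra. }
  have -> : INR (S (d * j + (c' - 1))%coq_nat) = INR d * (INR j + INR c' / INR d).
  { rewrite (_ : S (d * j + (c' - 1))%coq_nat = (d * j + c')%coq_nat); last lia.
    rewrite plus_INR mult_INR. field. lra. }
  rewrite -Rpower_mult_distr // Ropp_involutive. ring.
Qed.

Definition phi (n : Z) (d : nat) (P : Z) (c' : nat) : R :=
  if (gcdn c' d %| Z.abs_nat n) then
    powerRZ (INR d) P / powerRZ (INR (gcdn c' d)) P * sumZ (fun m => powerRZ (IZR m + u_cd n c' d) P)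
  else 0.

Lemma gcd_cond c d n : (0 < gcdn c d)%N ->
  (gcdn c d %| Z.abs_nat n) <-> (Z.gcd (Z.of_nat c) (Z.of_nat d) | n)%Z.
Proof.
  intro Hg. rewrite (dvdn_Z _ _ Hg).
  have Hs := dvdZ_spec (Z.of_nat (gcdn c d)) (Z.of_nat (Z.abs_nat n)) ltac:(lia).
  rewrite Nat2Z.inj_abs_nat Z.divide_abs_r gcdn_Z in Hs. rewrite Nat2Z.inj_abs_nat gcdn_Z. exact Hs.
Qed.

Lemma MT_residue n d P r2 k : (0 < d)%N -> (P <= -2)%Z ->
  Rpower (INR (S k)) r2 * sumZ (Gfull n d (S k) P) = Rpower (INR (S k)) (r2 + IZR P) * phi n d P (k %% d + 1).
Proof.
  intros Hd HP.
  set c' := (k %% d + 1)%N. set j := (k %/ d)%N.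
  have Hk : S k = (j * d + c')%N by rewrite /c' /j {1}(divn_eq k d); lia.
  have Hg : gcdn (S k) d = gcdn c' d by rewrite Hk gcdnC gcdnMDl gcdnC.
  have Hgp : (0 < gcdn c' d)%N by rewrite gcdn_gt0; apply/orP; right.
  rewrite /phi.
  case Hc: (gcdn c' d %| Z.abs_nat n).
  - have Hc' := proj1 (gcd_cond _ _ n Hgp) Hc.
    have [a' Ha'] := bstar_spec n c' d (solvable_gcd _ _ _ Hc').
    set bs := bstar n c' d in Ha' *.
    rewrite (M_formula n d (S k) P r2 (a' + bs * Z.of_nat j) bs) //.
    + rewrite Hg /u_cd. reflexivity.
    + have E : Z.of_nat (S k) = (Z.of_nat j * Z.of_nat d + Z.of_nat c')%Z by rewrite Hk; lia.
      rewrite E. nia.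
  - rewrite Gfull_zero //.
    + ring.
    + rewrite -gcd_cond. by rewrite Hg Hc. by rewrite Hg.
Qed.

Lemma AT_ex n d P r2 : n <> 0%Z ->
  ex_series (fun k => Rpower (INR (S k)) r2 * Gfull n d (S k) P 0).
Proof.
  intro Hn. apply (ex_series_fin _ (Z.abs_nat n)).
  intros k Hk. rewrite /Gfull.
  case E: (dvdZ _ _); last ring.
  apply dvdZ_spec in E; last lia.
  rewrite (_ : (0 * Z.of_nat d - n = - n)%Z) in E; last ring.
  apply Z.divide_opp_r, Z.divide_abs_r in E.
  apply Z.divide_pos_le in E; lia.
Qed.

Lemma sign_part n P (X : R) : - (powerRZ (IZR (- n)) P * X) = powerRZ (-1) (P + 1) * powerRZ (IZR n) P * X.
Proof.
  rewrite opp_IZR (_ : - IZR n = -1 * IZR n); last ring.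
  rewrite powerRZ_mult powerRZ_add; last lra.
  rewrite /= . ring.
Qed.

Lemma S_sum_split n r2 d P : n <> 0%Z -> (0 < d)%N -> (P <= -2)%Z ->
  ex_series (fun k => Rpower (INR (S k)) r2 * sumZ (Gfull n d (S k) P)) ->
  S_sum n r2 d P = Series (fun k => Rpower (INR (S k)) r2 * sumZ (Gfull n d (S k) P))
                   + powerRZ (-1) (P + 1) * powerRZ (IZR n) P * Defs.sigma r2 n.
Proof.
  intros Hn Hd HP HM. rewrite /S_sum.
  rewrite (Series_ext _ (fun k => Rpower (INR (S k)) r2 * sumZ (Gfull n d (S k) P)
                                 - Rpower (INR (S k)) r2 * Gfull n d (S k) P 0)).
  2: { intro k. rewrite inner_eq //. ring. }
  rewrite Series_minus //; last by apply AT_ex.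
  rewrite sigma_part //; last lia.
  rewrite -sign_part. ring.
Qed.

Lemma case_div n r2 d P : n <> 0%Z -> (0 < d)%N -> (P <= -2)%Z -> r2 + IZR P <= -2 ->
  (d %| Z.abs_nat n)%N -> S_sum n r2 d P = rhs_div n r2 d P.
Proof.
  intros Hn Hd HP Hs Hdn.
  have Hdz : (Z.of_nat d | n)%Z.
  { rewrite (dvdn_Z _ _ Hd) in Hdn.
    have H1 := proj1 (dvdZ_spec (Z.of_nat d) _ ltac:(lia)) Hdn.
    rewrite Nat2Z.inj_abs_nat in H1. exact (proj1 (Z.divide_abs_r _ _) H1). }
  destruct Hdz as [q Hq].
  set Z0 := sumZ (fun t => powerRZ (IZR t) P).
  have EM : forall k, Rpower (INR (S k)) r2 * sumZ (Gfull n d (S k) P) = (powerRZ (INR d) P * Z0) * wE r2 P d (S k).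
  { intro k. rewrite (M_formula n d (S k) P r2 q 0) //. 2: lia.
    rewrite (sumZ_ext _ (fun t => powerRZ (IZR t) P)).
    2: { intro t. f_equal. rewrite /= Rmult_0_l /Rdiv Rmult_0_l. ring. }
    rewrite /wE /Z0 /Rdiv. ring. }
  have HexW : ex_series (fun k => wE r2 P d (S k)) by apply ex_series_Rabs, wE_abs.
  have HexM : ex_series (fun k => Rpower (INR (S k)) r2 * sumZ (Gfull n d (S k) P)).
  { apply (ex_series_ext (fun k => (powerRZ (INR d) P * Z0) * wE r2 P d (S k))).
    intro k; by rewrite EM.
    by apply (ex_series_scal_l (powerRZ (INR d) P * Z0) (fun k => wE r2 P d (S k))). }
  rewrite S_sum_split //.
  rewrite (Series_ext _ _ EM) Series_scal_l.
  change (Series (fun k => wE r2 P d (S k))) with (EA r2 P d).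
  rewrite EA_euler // /Z0 Z0_value // /rhs_div.
  ring.
Qed.

Lemma case_ndiv n r2 d P : n <> 0%Z -> (0 < d)%N -> (P <= -2)%Z -> r2 + IZR P <= -2 ->
  S_sum n r2 d P = rhs_ndiv n r2 d P.
Proof.
  intros Hn Hd HP Hs.
  set s := r2 + IZR P.
  set hh := fun c' k => if (k %% d + 1 == c')%N then Rpower (INR (S k)) s * phi n d P c' else 0.
  have EM : forall k, Rpower (INR (S k)) r2 * sumZ (Gfull n d (S k) P) =
                      foldr Rplus 0 (map (fun c' => hh c' k) (iota 1 d)).
  { intro k. rewrite MT_residue // /hh.
    rewrite (foldr_pick (k %% d + 1)%N (fun c' => Rpower (INR (S k)) s * phi n d P c') d 1).
    have -> : ((1 <= k %% d + 1)%N && (k %% d + 1 < 1 + d)%N) = true.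
    { have := ltn_pmod k Hd. lia. }
    reflexivity. }
  have Hres : forall c', c' \in iota 1 d ->
     ex_series (hh c') /\ Series (hh c') = phi n d P c' * (Rpower (INR d) s * hurwitz_zeta (- s) (INR c' / INR d)).
  { intros c' Hc. rewrite mem_iota in Hc. apply residue_series => //; lia. }
  have [HexF HSF] := Series_foldr (iota 1 d) hh (fun c Hc => proj1 (Hres c Hc)).
  have HexM : ex_series (fun k => Rpower (INR (S k)) r2 * sumZ (Gfull n d (S k) P)).
  { apply (ex_series_ext _ _ (fun k => Logic.eq_sym (EM k))). exact HexF. }
  rewrite S_sum_split //.
  rewrite (Series_ext _ _ EM) HSF /rhs_ndiv.
  rewrite (foldr_filter (fun c' => gcdn c' d %| Z.abs_nat n)) -foldr_scal.
  have -> : [seq Series (hh c) | c <- iota 1 d] =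
            [seq Rpower (INR d) (r2 + 2 * IZR P) *
                 (if gcdn c d %| Z.abs_nat n
                  then hurwitz_zeta (- r2 - IZR P) (INR c / INR d) / powerRZ (INR (gcdn c d)) P *
                       sumZ (fun m => powerRZ (IZR m + u_cd n c d) P)
                  else 0) | c <- iota 1 d].
  { apply eq_in_map => c Hc. rewrite (proj2 (Hres c Hc)) /phi.
    have -> : - s = - r2 - IZR P by rewrite /s; ring.
    have Hdp : 0 < INR d by apply lt_0_INR; lia.
    have -> : Rpower (INR d) (r2 + 2 * IZR P) = Rpower (INR d) s * powerRZ (INR d) P.
    { rewrite powerRZ_Rpower // -Rpower_plus /s. f_equal. ring. }
    case: (gcdn c d %| Z.abs_nat n); rewrite /Rdiv; ring. }
  ring.
Qed.

Theorem lemma3p1 :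
  forall r2 : R, exists P0 : Z,
  forall (n : Z) (d : nat) (P : Z),
    n <> 0%Z -> (0 < d)%N -> (P <= P0)%Z ->
    ((d %| Z.abs_nat n)%N -> S_sum n r2 d P = rhs_div n r2 d P) /\
    (~~ (d %| Z.abs_nat n)%N -> S_sum n r2 d P = rhs_ndiv n r2 d P).
Proof.
  intro r2. exists (Z.min (-2) (-2 - up r2)).
  intros n d P Hn Hd HP.
  have HP2 : (P <= -2)%Z by lia.
  have Hs : r2 + IZR P <= -2.
  { have [H1 _] := archimed r2.
    have H2 : IZR P <= IZR (-2 - up r2) by apply IZR_le; lia.
    rewrite minus_IZR in H2. lra. }
  split.
  - intro Hdn. by apply case_div.
  - intro Hdn. by apply case_ndiv.
Qed.
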